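(* Let $G$ be a finite simple graph with $n=|V(G)|$, and let $v_1,\dots,v_r$, $r\ge 2$, be a $\beta$-sequence in $G$ such that $N(v_1,\dots,v_{r-1})$ is a $\delta$-set in $G$. Then $r\ge W(G)$.
   Context: Graphs are finite, undirected, without loops or multiple edges; $N(v)$ is the set of vertices adjacent to $v$, $d(v)=|N(v)|$, and $N(v_1,\dots,v_k)=\bigcap_{j=1}^k N(v_j)$. Define $W(G)=\sum_{v\in V(G)}\frac{1}{n-d(v)}$. A set $V\subseteq V(G)$ is a $\delta$-set in $G$ if $d(v)\le n-|V|$ for all $v\in V$. A sequence $v_1,\dots,v_r$ of vertices is a $\beta$-sequence in $G$ if (i) $d(v_1)=\max\{d(v)\mid v\in V(G)\}$, and (ii) for $2\le i\le r$, $v_i\in N(v_1,\dots,v_{i-1})$ and $d(v_i)=\max\{d(v)\mid v\in N(v_1,\dots,v_{i-1})\}$ (degrees taken in $G$). *)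

(* Defs.v *)
(* A finite simple graph is a symmetric irreflexive relation
   e : rel T on a finType T; V(G) = T, n = #|T|. *)
From mathcomp Require Import all_boot all_order all_algebra.
Set Implicit Arguments. Unset Strict Implicit. Unset Printing Implicit Defensive.
Import Order.TTheory GRing.Theory Num.Theory.

Section Graph.
Variables (T : finType) (e : rel T).

Definition nbhd (v : T) : {set T} := [set u | e v u].
Definition deg (v : T) : nat := #|nbhd v|.

Definition common_nbhd (s : seq T) : {set T} := [set u | all (fun w => e w u) s].

Definition W : rat := \sum_(v : T) ((#|T| - deg v)%:R)^-1.

Definition delta_set (V : {set T}) : Prop :=
  forall v, v \in V -> deg v <= #|T| - #|V|.

(* beta-sequence s = [v_1; ...; v_r]; entry nth x s i (0-based) is v_{i+1},
   and N(v_1,...,v_i) = common_nbhd (take i s). *)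
Definition beta_seq (s : seq T) : Prop :=
  match s with
  | [::] => False
  | x :: _ =>
      (forall u, deg u <= deg x) /\
      (forall i, 1 <= i < size s ->
         nth x s i \in common_nbhd (take i s) /\
         (forall u, u \in common_nbhd (take i s) -> deg u <= deg (nth x s i)))
  end.
End Graph.

(* Main.v *)
Require Import Defs.
From mathcomp Require Import all_boot all_order all_algebra.
From mathcomp Require Import lra zify.
Import Order.TTheory GRing.Theory Num.Theory.
Local Open Scope ring_scope.

Section Aux.
Variables (T : finType) (e : rel T) (e_irr : irreflexive e).

Definition SS (X : {set T}) : rat := \sum_(v in X) ((#|T| - deg e v)%:R)^-1.

Lemma deg_lt v : (deg e v < #|T|)%N.
Proof.
rewrite /deg -cardsT; apply: proper_card; apply/properP; split.
  by apply/subsetP=> x; rewrite in_setT.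
by exists v; rewrite ?in_setT // /nbhd inE e_irr.
Qed.

Lemma inv_mono (m k : nat) : (0 < m)%N -> (m <= k)%N ->
  ((k%:R : rat)^-1 <= (m%:R)^-1).
Proof.
move=> m0 mk; rewrite lef_pV2 ?ler_nat // posrE ltr0n //.
exact: leq_trans mk.
Qed.

Lemma bound_set (X : {set T}) (m : nat) : (0 < m)%N -> (#|X| <= m)%N ->
  (forall v, v \in X -> (m <= #|T| - deg e v)%N) -> SS X <= 1.
Proof.
move=> m0 Xm H; rewrite /SS.
have h1 : \sum_(v in X) ((#|T| - deg e v)%:R : rat)^-1 <= \sum_(v in X) (m%:R : rat)^-1.
  by apply: ler_sum=> v vX; apply: inv_mono=> //; apply: H.
have h2 : \sum_(v in X) (m%:R : rat)^-1 <= 1.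
  rewrite sumr_const -[_ *+ #|X|]mulr_natr.
  have h3 : (m%:R : rat)^-1 * #|X|%:R <= (m%:R)^-1 * m%:R.
    by rewrite ler_wpM2l ?invr_ge0 ?ler0n // ler_nat.
  have hm : (m%:R : rat) != 0 by rewrite pnatr_eq0 -lt0n.
  by rewrite mulVf // in h3.
exact: le_trans h1 h2.
Qed.
End Aux.
Arguments SS {T} e X.
Arguments deg_lt {T e} e_irr v.
Arguments bound_set {T e} X m _ _ _.

Theorem theorem3 (T : finType) (e : rel T) (e_sym : symmetric e)
  (e_irr : irreflexive e) (s : seq T) :
  beta_seq e s -> (2 <= size s)%N ->
  delta_set e (common_nbhd e (take (size s).-1 s)) ->
  W e <= (size s)%:R.
Proof.
case: s => [//|x s'] /= [Hmax Hb] Hsz Hd.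
set s := x :: s' in Hb Hd *.
pose A k := common_nbhd e (take k s).
have step : forall k, (0 < k)%N -> (k < size s)%N ->
    SS e (A k.-1) <= SS e (A k) + 1.
  move=> k k0 ks.
  have hk1 : (k.-1 < size s)%N by rewrite (leq_trans _ ks) // prednK.
  have tk : take k s = rcons (take k.-1 s) (nth x s k.-1)
    by rewrite -take_nth // prednK.
  have sub : A k \subset A k.-1.
    apply/subsetP=> u; rewrite /A /common_nbhd !inE.
    by rewrite tk all_rcons => /andP[].
  rewrite /SS (big_setID (A k)) /= (setIidPr sub) lerD2l.
  set vk := nth x s k.-1.
  have Hdeg : forall u, u \in A k.-1 -> (deg e u <= deg e vk)%N.
    move=> u uA; case E: k.-1 => [|j].
      by rewrite /vk E; apply: Hmax.
    have hj : (0 < j.+1 < size s)%N by rewrite /= -E.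
    have [_ H2] := Hb j.+1 hj.
    by rewrite /vk E; apply: H2; rewrite -E.
  apply: (bound_set _ (#|T| - deg e vk)).
  - by rewrite subn_gt0 deg_lt.
  - rewrite /deg -[nbhd e vk]setCK -cardsCs; apply: subset_leq_card; apply/subsetP=> u.
    rewrite /A /common_nbhd /nbhd !inE tk all_rcons.
    by case: (e vk u); rewrite ?andbT ?andbF //; case: (all _ _).
  - move=> v; rewrite inE => /andP[_ vA]; apply: leq_sub2l; exact: Hdeg.
have iter : forall k, (k < size s)%N -> SS e (A 0) <= SS e (A k) + k%:R.
  elim=> [|k IH] ks; first by rewrite addr0.
  apply: (le_trans (IH (ltnW ks))).
  have h := step k.+1 isT ks; rewrite /= in h.
  rewrite -natr1; lra.
have W0 : W e = SS e (A 0).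
  rewrite /W /SS /A /=; apply: eq_bigl=> v; by rewrite /common_nbhd !inE.
rewrite W0.
have := iter (size s).-1; rewrite prednK ?ltnSn; last by rewrite (leq_trans _ Hsz).
move=> /(_ isT) H; apply: (le_trans H).
have hS : SS e (A (size s).-1) <= 1.
  case: (posnP #|A (size s).-1|) => HA.
    move/eqP: HA; rewrite cards_eq0 => /eqP ->; by rewrite /SS big_set0.
  apply: (bound_set _ (#|A (size s).-1|)) => // v vA.
  have h1 := Hd v vA; have h2 := deg_lt e_irr v.
  rewrite /A /= in HA vA h1 *.
  have h3 : (#|common_nbhd e (take (size s') s)| <= #|T|)%N by apply: max_card.
  move: h1 h2 h3; move: (deg e v) #|T| #|common_nbhd e (take (size s') s)| => d n a; lia.
have -> : (size s)%:R = (size s).-1%:R + 1 :> rat by rewrite natr1 prednK.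
lra.
Qed.
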